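(* Let $G=(V,E)$ be a graph with edge set partitioned into color classes $E_1,\dots,E_k$, all color bounds equal to $1$, and consider the natural LP relaxation $\mathcal{M}_c=\{x\in[0,1]^E:\ \sum_{e\in\delta(v)}x_e\le 1\ \forall v\in V,\ \sum_{e\in E_j}x_e\le 1\ \forall j\}$. Then after 2 rounds of the Sherali–Adams hierarchy applied to $\mathcal{M}_c$, every bi-chromatic constraint is implied: every $x\in F_2$ satisfies $\sum_{e\in BC}x_e\le 1$ for every bi-chromatic 4-cycle $BC$ of $G$.
   Context: A bi-chromatic 4-cycle is a cycle $e_1,e_3,e_2,e_4$ of length 4 in $G$ whose edges alternate between two color classes (two opposite edges $e_1,e_2$ in one class, the other two $e_3,e_4$ in another class). $\delta(v)$ is the set of edges incident to $v$. Sherali–Adams hierarchy: for $F_0=\{x\in[0,1]^n: a_i^Tx\le b_i\}$ (box constraints $x_j\ge0$, $1-x_j\ge0$ included), the level-$\psi$ lifted system has variables $y_Z$, $Z\subseteq[n]$, $y_\emptyset=1$, and for all disjoint $\Gamma,\Delta\subseteq[n]$ with $|\Gamma|+|\Delta|\le\psi$ the constraints $\sum_{H\subseteq\Delta}(-1)^{|H|}(b_i y_{\Gamma\cup H}-\sum_j a_{ij}y_{\Gamma\cup H\cup\{j\}})\ge0$ for each $i$ and $\sum_{H\subseteq\Delta}(-1)^{|H|}y_{\Gamma\cup H}\ge 0$ (linearizations of products of constraints with $\prod_{\gamma\in\Gamma}x_\gamma\prod_{\delta\in\Delta}(1-x_\delta)$, using $x_i^2=x_i$ and $\prod_{\zeta\in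 Z}x_\zeta\mapsto y_Z$); $F_\psi$ is the projection onto $y_{\{i\}}=x_i$. *)

(* Defs.v *)
From mathcomp Require Import all_boot all_order all_algebra.
Set Implicit Arguments. Unset Strict Implicit. Unset Printing Implicit Defensive.
Import Order.TTheory GRing.Theory Num.Theory.
Local Open Scope ring_scope.

(* Generic Sherali-Adams lifting of F_0 = { x : A_i . x <= b_i  (i : I) },
   where the rows (I, A, b) already include the box constraints.
   Variables y_Z for Z : {set n}. *)
Definition SA_lifted (R : realFieldType) (n I : finType)
  (A : I -> n -> R) (b : I -> R) (psi : nat) (y : {set n} -> R) : Prop :=
  y set0 = 1 /\
  forall Gam Del : {set n}, [disjoint Gam & Del] -> (#|Gam| + #|Del| <= psi)%N ->
    (forall i : I,
        0 <= \sum_(H in powerset Del) (-1) ^+ #|H| *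
               (b i * y (Gam :|: H) - \sum_(j : n) A i j * y (Gam :|: H :|: [set j])))
    /\ 0 <= \sum_(H in powerset Del) (-1) ^+ #|H| * y (Gam :|: H).

Definition SA_level (R : realFieldType) (n I : finType)
  (A : I -> n -> R) (b : I -> R) (psi : nat) (x : n -> R) : Prop :=
  exists y : {set n} -> R, SA_lifted A b psi y /\ forall j : n, x j = y [set j].

(* Graph: vertex type V, edge type E, ends e = set of the two endpoints of e;
   edge colouring col : E -> 'I_k (colour classes E_1..E_k). *)

(* Rows of M_c: degree constraints (v : V), colour constraints (c : 'I_k),
   and box constraints -x_e <= 0 and x_e <= 1 (e : E). *)
Definition Mc_A (R : realFieldType) (V E : finType) (k : nat)
  (ends : E -> {set V}) (col : E -> 'I_k)
  (i : (V + 'I_k) + (E + E)) (j : E) : R :=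
  match i with
  | inl (inl v) => if v \in ends j then 1 else 0
  | inl (inr c) => if col j == c then 1 else 0
  | inr (inl e) => if j == e then -1 else 0
  | inr (inr e) => if j == e then 1 else 0
  end.

Definition Mc_b (R : realFieldType) (V E : finType) (k : nat)
  (i : (V + 'I_k) + (E + E)) : R :=
  match i with
  | inl _ => 1
  | inr (inl _) => 0
  | inr (inr _) => 1
  end.

Definition bichromatic_4cycle (V E : finType) (k : nat)
  (ends : E -> {set V}) (col : E -> 'I_k) (e1 e3 e2 e4 : E) : Prop :=
  exists v1 v2 v3 v4 : V,
    [/\ uniq [:: v1; v2; v3; v4],
        ends e1 = [set v1; v2], ends e3 = [set v2; v3],
        ends e2 = [set v3; v4] & ends e4 = [set v4; v1]]
    /\ [/\ col e1 = col e2, col e3 = col e4 & col e1 != col e3].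

(* Main.v *)
Require Import Defs.
From mathcomp Require Import all_boot all_order all_algebra.
From mathcomp Require Import ring lra.
Import Order.TTheory GRing.Theory Num.Theory.
Local Open Scope ring_scope.

Lemma powerset2 (n : finType) (f g : n) :
  powerset [set f; g] = set0 |: ([set f] |: ([set g] |: [set [set f; g]])).
Proof.
apply/setP => H; rewrite powersetE !inE; apply/idP/idP.
- move=> /subsetP sub.
  have hH : forall z, z \in H -> (z == f) || (z == g).
    by move=> z /sub; rewrite !inE.
  case: (boolP (f \in H)) => hf; case: (boolP (g \in H)) => hg.
  + have -> : H = [set f; g]; last by rewrite eqxx !(orbT, orTb).
    apply/setP => z; rewrite !inE; apply/idP/idP; first exact: hH.
    by case/orP => /eqP ->.
  + have -> : H = [set f]; last by rewrite eqxx !(orbT, orTb).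
    apply/setP => z; rewrite !inE; apply/idP/idP.
    * by move=> zH; case/orP: (hH z zH) => // /eqP ez; move: zH; rewrite ez (negbTE hg).
    * by move/eqP ->.
  + have -> : H = [set g]; last by rewrite eqxx !(orbT, orTb).
    apply/setP => z; rewrite !inE; apply/idP/idP.
    * by move=> zH; case/orP: (hH z zH) => // /eqP ez; move: zH; rewrite ez (negbTE hf).
    * by move/eqP ->.
  + have -> : H = set0; last by rewrite eqxx !(orbT, orTb).
    apply/setP => z; rewrite !inE; apply/idP => zH; case/orP: (hH z zH) => /eqP ez.
    * by move: zH; rewrite ez (negbTE hf).
    * by move: zH; rewrite ez (negbTE hg).
- move=> /orP [/eqP ->|/orP [/eqP ->|/orP [/eqP->|/eqP->]]]; rewrite ?sub0set ?sub1set ?subxx // !inE eqxx ?orbT //.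
Qed.

Lemma sum_powerset2 (R : realFieldType) (n : finType) (f g : n) (F : {set n} -> R) :
  f != g ->
  \sum_(H in powerset [set f; g]) (-1) ^+ #|H| * F H =
  F set0 - F [set f] - F [set g] + F [set f; g].
Proof.
move=> fg; rewrite powerset2.
have n0f : set0 != [set f] by apply/eqP => /setP /(_ f); rewrite !inE eqxx.
have n0g : set0 != [set g] by apply/eqP => /setP /(_ g); rewrite !inE eqxx.
have n0fg : set0 != [set f; g] by apply/eqP => /setP /(_ f); rewrite !inE eqxx.
have nfg : [set f] != [set g] by apply/eqP => /setP /(_ f); rewrite !inE eqxx (negbTE fg).
have nffg : [set f] != [set f; g] by apply/eqP => /setP /(_ g); rewrite !inE eqxx orbT eq_sym (negbTE fg).
have ngfg : [set g] != [set f; g] by apply/eqP => /setP /(_ f); rewrite !inE eqxx (negbTE fg).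
rewrite big_setU1 ?inE ?negb_or ?n0f ?n0g ?n0fg //=.
rewrite big_setU1 ?inE ?negb_or ?nfg ?nffg //=.
rewrite big_setU1 ?inE ?negb_or ?ngfg //=.
rewrite big_set1 cards0 !cards1 cards2 fg /=.
have -> : (-1 : R) ^+ 2 = 1 by rewrite expr2 mulN1r opprK.
rewrite expr0 expr1 !mul1r !mulN1r; lra.
Qed.
Set Implicit Arguments. Unset Strict Implicit.

Section SA.
Variables (R : realFieldType) (n I : finType) (A : I -> n -> R) (b : I -> R)
  (y : {set n} -> R).
Hypothesis Hy : SA_lifted A b 2 y.

Lemma dis0 (G : {set n}) : [disjoint G & set0].
Proof. by rewrite -setI_eq0 setI0. Qed.
Lemma dis0' (G : {set n}) : [disjoint set0 & G].
Proof. by rewrite -setI_eq0 set0I. Qed.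

Lemma pow0sum (F : {set n} -> R) :
  \sum_(H in powerset set0) (-1) ^+ #|H| * F H = F set0.
Proof. by rewrite powerset0 big_set1 cards0 expr0 mul1r. Qed.

Lemma L0 (G : {set n}) : (#|G| <= 2)%N -> 0 <= y G.
Proof.
move=> hG; have [_ /(_ G set0)] := Hy.
rewrite cards0 addn0 => /(_ (dis0 G) hG) [_].
by rewrite pow0sum setU0.
Qed.

Lemma L1 (G : {set n}) (i : I) : (#|G| <= 2)%N ->
  0 <= b i * y G - \sum_j A i j * y (G :|: [set j]).
Proof.
move=> hG; have [_ /(_ G set0)] := Hy.
rewrite cards0 addn0 => /(_ (dis0 G) hG) [/(_ i)].
by rewrite pow0sum !setU0.
Qed.

Definition T (f g j : n) := y [set j] - y ([set f] :|: [set j])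
  - y ([set g] :|: [set j]) + y ([set f; g] :|: [set j]).
Arguments T : simpl never.

Lemma LD (f g : n) (i : I) : f != g -> b i = 1 ->
  0 <= 1 - y [set f] - y [set g] + y [set f; g] - \sum_j A i j * T f g j.
Proof.
move=> fg bi; have [y0 /(_ set0 [set f; g])] := Hy.
rewrite cards0 cards2 fg => /(_ (dis0' _) isT) [/(_ i)].
rewrite sum_powerset2 // !set0U bi y0.
have -> : \sum_j A i j * y (set0 :|: [set j]) = \sum_j A i j * y [set j].
  by apply: eq_bigr => j _; rewrite set0U.
move=> h _; move: h.
have -> : \sum_j A i j * T f g j = \sum_j A i j * y [set j]
   - \sum_j A i j * y ([set f] :|: [set j]) - \sum_j A i j * y ([set g] :|: [set j])
   + \sum_j A i j * y ([set f; g] :|: [set j]).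
  rewrite -!sumrB -big_split /=; apply: eq_bigr => j _; rewrite /T; ring.
lra.
Qed.

Lemma Tge0 (f g j : n) (i : I) : f != g -> b i = 0 ->
  (forall j', A i j' = if j' == j then -1 else 0) -> 0 <= T f g j.
Proof.
move=> fg bi hA; have [y0 /(_ set0 [set f; g])] := Hy.
rewrite cards0 cards2 fg => /(_ (dis0' _) isT) [/(_ i)].
have hs : forall Y : n -> R, \sum_j' A i j' * Y j' = - Y j.
  move=> Y; rewrite (bigD1 j) //= big1 => [|j' /negbTE hj]; rewrite hA ?hj.
    by rewrite eqxx mulN1r addr0.
  by rewrite mul0r.
rewrite sum_powerset2 // !set0U bi !mul0r !sub0r !hs !opprK /T.
by rewrite set0U => h _.
Qed.

Lemma pair_le0 (f g : n) (i : I) : f != g -> b i = 1 -> A i f = 1 -> A i g = 1 ->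
  (forall j, 0 <= A i j) -> y [set f; g] <= 0.
Proof.
move=> fg bi hf hg hA.
have := L1 (G := [set f]) i; rewrite cards1 => /(_ isT).
rewrite (bigD1 f) //= (bigD1 g) 1?eq_sym //= setUid bi hf hg !mul1r.
have : 0 <= \sum_(j | (j != f) && (j != g)) A i j * y ([set f] :|: [set j]).
  apply: sumr_ge0 => j _; apply: mulr_ge0 => //; apply: L0.
  by rewrite cards2; case: (f != j).
lra.
Qed.

Lemma triple_ge0 (G : {set n}) (g : n) (i : I) : (#|G| <= 2)%N -> b i = 0 ->
  (forall j', A i j' = if j' == g then -1 else 0) -> 0 <= y (G :|: [set g]).
Proof.
move=> hG bi hA; have := L1 i hG.
rewrite bi mul0r sub0r (bigD1 g) //= big1 => [|j' /negbTE hj]; last by rewrite hA hj mul0r.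
by rewrite hA eqxx mulN1r addr0 opprK.
Qed.

End SA.
Unset Implicit Arguments.

Theorem mainTheorem6 (R : realFieldType) (V E : finType) (k : nat)
  (ends : E -> {set V}) (col : E -> 'I_k)
  (hends : forall e : E, #|ends e| = 2%N)
  (x : E -> R)
  (hx : SA_level (Mc_A R ends col) (@Mc_b R V E k) 2 x) :
  forall e1 e3 e2 e4 : E, bichromatic_4cycle ends col e1 e3 e2 e4 ->
    x e1 + x e3 + x e2 + x e4 <= 1.
Proof.
move=> e1 e3 e2 e4 [v1 [v2 [v3 [v4 [[hu h1 h3 h2 h4] [c12 c34 c13]]]]]].
move: hx => [y [Hy hxy]]; rewrite !hxy.
move: hu; rewrite /= !inE !negb_or => /and4P [/and3P [n12 n13 n14] /andP [n23 n24] n34 _].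
have d31 : e3 != e1 by by apply/eqP => E0; move: c13; rewrite E0 eqxx.
have d41 : e4 != e1 by by apply/eqP => E0; move: c13; rewrite -E0 c34 eqxx.
have d32 : e3 != e2 by by apply/eqP => E0; move: c13; rewrite E0 c12 eqxx.
have d42 : e4 != e2 by by apply/eqP => E0; move: c13; rewrite c12 c34 -E0 eqxx.
have d34 : e3 != e4.
  apply/eqP => E0; move: h3; rewrite E0 h4 => /setP /(_ v2); rewrite !inE eqxx /=.
  by rewrite (negbTE n24) eq_sym (negbTE n12).
have d21 : e2 != e1.
  apply/eqP => E0; move: h2; rewrite E0 h1 => /setP /(_ v3); rewrite !inE eqxx ?orbT /=.
  by rewrite eq_sym (negbTE n13) eq_sym (negbTE n23).
pose a := col e1.
have KD := LD Hy (i := inl (inr a)) d34 erefl.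
have Tj : forall j, 0 <= T y e3 e4 j.
  by move=> j; apply: (Tge0 Hy (i := inr (inl j))) => // j'.
have Ssum : T y e3 e4 e1 + T y e3 e4 e2 <=
    \sum_j Mc_A R ends col (inl (inr a)) j * T y e3 e4 j.
  rewrite (bigD1 e1) // (bigD1 e2) //.
  set S := \sum_(i | _) _.
  have : 0 <= S.
    apply: sumr_ge0 => j _; apply: mulr_ge0; [by rewrite /=; case: ifP | exact: Tj].
  rewrite /= eqxx -c12 eqxx !mul1r; lra.
have nonneg : forall i, (forall j, i = inl (inl j) \/ True) -> True by [].
have p31 : y [set e3; e1] <= 0.
  apply: (pair_le0 Hy (i := inl (inl v2))) => //=;
    rewrite ?h3 ?h1 ?inE ?eqxx ?orbT //; by move=> j; case: ifP.
have p41 : y [set e4; e1] <= 0.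
  apply: (pair_le0 Hy (i := inl (inl v1))) => //=;
    rewrite ?h4 ?h1 ?inE ?eqxx ?orbT //; by move=> j; case: ifP.
have p32 : y [set e3; e2] <= 0.
  apply: (pair_le0 Hy (i := inl (inl v3))) => //=;
    rewrite ?h3 ?h2 ?inE ?eqxx ?orbT //; by move=> j; case: ifP.
have p42 : y [set e4; e2] <= 0.
  apply: (pair_le0 Hy (i := inl (inl v4))) => //=;
    rewrite ?h4 ?h2 ?inE ?eqxx ?orbT //; by move=> j; case: ifP.
have p34 : y [set e3; e4] <= 0.
  apply: (pair_le0 Hy (i := inl (inr (col e3)))) => //=;
    rewrite ?c34 ?eqxx //; by move=> j; case: ifP.
have t1 : 0 <= y ([set e3; e4] :|: [set e1]).
  by apply: (triple_ge0 Hy (i := inr (inl e1))) => //; rewrite cards2 d34.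
have t2 : 0 <= y ([set e3; e4] :|: [set e2]).
  by apply: (triple_ge0 Hy (i := inr (inl e2))) => //; rewrite cards2 d34.
move: KD Ssum (Tj e1) (Tj e2); rewrite /T.
lra.
Qed.
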